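(* Let $x_1,\dots,x_N\in\mathbb{R}^M$ and $y_1,\dots,y_N\in\mathbb{R}$, and let $X_N=[x_1\ \cdots\ x_N]^\top\in\mathbb{R}^{N\times M}$ and $Y_N=[y_1\ \cdots\ y_N]^\top\in\mathbb{R}^N$. Let $\theta_{MN}=X_N^+Y_N$ be the minimum-norm least-squares solution. Let $x\in\mathbb{R}^M$ be a test vector and $y\in\mathbb{R}$ a test label, and set $$\|x_\perp\|^2 := x^\top\left[I-X_N^+X_N\right]x,$$ assumed nonzero. Let $X_{N+1}=[x_1\ \cdots\ x_N\ x]^\top$, $Y_{N+1}=[y_1\ \cdots\ y_N\ y]^\top$, and let $\theta_{N+1}=X_{N+1}^+Y_{N+1}$ be the minimum-norm least-squares solution based on the $N+1$ samples. Then $$\|\theta_{N+1}\|^2=\|\theta_{MN}\|^2+\frac{1}{\|x_\perp\|^2}\left(y-x^\top\theta_{MN}\right)^2 .$$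
   Context: $\|\cdot\|$ is the Euclidean norm. For a data matrix $X$ with $N$ rows and $M$ columns, the pseudo-inverse is $X^+=(X^\top X)^{-1}X^\top$ if $\mathrm{rank}(X^\top X)=M$, and $X^+=X^\top(XX^\top)^{-1}$ otherwise (the Moore–Penrose pseudo-inverse in these full-rank cases). *)

(* Defs.v *)
From HB Require Import structures.
From mathcomp Require Import all_boot all_order all_algebra.
Set Implicit Arguments. Unset Strict Implicit. Unset Printing Implicit Defensive.
Import Order.TTheory GRing.Theory Num.Theory.
Local Open Scope ring_scope.

(* P is the Moore--Penrose pseudo-inverse of A (real matrices, so the
   adjoint is the transpose): the four Penrose conditions. *)
Definition is_MP_pinv (R : realFieldType) (m n : nat)
  (A : 'M[R]_(m, n)) (P : 'M[R]_(n, m)) : Prop :=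
  [/\ A *m P *m A = A, P *m A *m P = P,
      (A *m P)^T = A *m P & (P *m A)^T = P *m A].

Definition sqnorm (R : realFieldType) (n : nat) (v : 'cV[R]_n) : R :=
  \sum_(i < n) v i 0 ^+ 2.

(* Main.v *)
Require Import Defs.
From HB Require Import structures.
From mathcomp Require Import all_boot all_order all_algebra.
Import Order.TTheory GRing.Theory Num.Theory.
Local Open Scope ring_scope.
Lemma mp_sol (R : realFieldType) (m n : nat) (A : 'M[R]_(m, n)) (P : 'M[R]_(n, m))
  (Yv : 'cV[R]_m) (phi : 'cV[R]_n) (w : 'cV[R]_m) :
  is_MP_pinv A P -> A^T *m A *m phi = A^T *m Yv -> phi = A^T *m w ->
  P *m Yv = phi.
Proof.
case=> h1 h2 h3 h4 hn hr.
have e1 : phi = P *m A *m phi.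
  by rewrite hr -{1}h1 -mulmxA trmx_mul h4 !mulmxA.
have e2 : P *m Yv = P *m A *m P *m A *m phi.
  transitivity (P *m (A *m P)^T *m Yv).
    by rewrite h3 !mulmxA h2.
  rewrite trmx_mul -!mulmxA -hn.
  by rewrite !mulmxA -(mulmxA P) -trmx_mul h3 !mulmxA.
by rewrite e2 h2 -e1.
Qed.
Lemma sqnormE (R : realFieldType) (n : nat) (v : 'cV[R]_n) :
  sqnorm v = (v^T *m v) 0 0.
Proof. rewrite /sqnorm mxE; apply: eq_bigr => i _; by rewrite !mxE expr2. Qed.
From mathcomp Require Import ring.
Theorem theorem3 (R : realFieldType) (M N : nat)
  (X : 'M[R]_(N, M)) (Y : 'cV[R]_N) (x : 'cV[R]_M) (y : R)
  (PN : 'M[R]_(M, N)) (PN1 : 'M[R]_(M, N + 1)) :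
  is_MP_pinv X PN ->
  is_MP_pinv (col_mx X x^T) PN1 ->
  let thetaMN := PN *m Y in
  let thetaN1 := PN1 *m col_mx Y (y%:M : 'cV[R]_1) in
  let xperp2 := (x^T *m (1%:M - PN *m X) *m x) 0 0 in
  xperp2 != 0 ->
  sqnorm thetaN1 = sqnorm thetaMN + xperp2^-1 * (y - (x^T *m thetaMN) 0 0) ^+ 2.
Proof.
move=> hP hP1 th th1 s hs.
have [h1 h2 h3 h4] := hP.
set Pi := 1%:M - PN *m X.
have F1 : X *m Pi = 0 by rewrite mulmxBr mulmx1 mulmxA h1 subrr.
have F2 : Pi^T = Pi by rewrite /Pi linearB /= trmx1 h4.
have F3 : Pi *m Pi = Pi.
  by rewrite {1}/Pi mulmxBl mul1mx -mulmxA F1 mulmx0 subr0.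
have F4 : Pi *m PN = 0 by rewrite mulmxBl mul1mx h2 subrr.
set c := y - (x^T *m th) 0 0.
set u := Pi *m x.
have G3 : u^T *m u = x^T *m Pi *m x.
  by rewrite /u trmx_mul F2 mulmxA -(mulmxA x^T Pi Pi) F3.
have G3' : (u^T *m u) 0 0 = s by rewrite G3.
have G4 : (x^T *m u) 0 0 = s by rewrite /u mulmxA.
set phi := th + (c / s) *: u.
have Hphi : th1 = phi.
  apply: (@mp_sol _ _ _ _ _ _ _ (col_mx (PN^T *m PN *m Y - (c/s) *: (PN^T *m x)) (c/s)%:M) hP1).
  - rewrite tr_col_mx trmxK -mulmxA mul_col_mx !mul_row_col.
    have -> : X *m phi = X *m th.
      by rewrite /phi mulmxDr -scalemxAr /u (mulmxA X Pi x) F1 mul0mx scaler0 addr0.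
    have -> : x^T *m phi = y%:M.
      have G4m : x^T *m u = s%:M by rewrite [LHS]mx11_scalar G4.
      rewrite /phi mulmxDr -scalemxAr G4m [x^T *m th]mx11_scalar scale_scalar_mx.
      rewrite -raddfD /= divfK // /c.
      by congr (_%:M); ring.
    by rewrite /th (mulmxA X PN Y) -h3 (mulmxA X^T) -trmx_mul h1.
  - rewrite tr_col_mx mul_row_col trmxK mul_mx_scalar.
    rewrite mulmxBr -scalemxAr !mulmxA -trmx_mul h4.
    rewrite h2 /phi /u /Pi mulmxBl mul1mx scalerBr.
    by rewrite addrA addrAC.
have G0 : PN^T *m Pi = 0 by rewrite -F2 -trmx_mul F4 trmx0.
have G1 : th^T *m u = 0.
  by rewrite /th /u trmx_mul !mulmxA -(mulmxA Y^T) G0 mulmx0 mul0mx.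
have G2 : u^T *m th = 0.
  by rewrite -[u^T *m th]trmxK trmx_mul trmxK G1 trmx0.
have Tr : (th + (c/s) *: u)^T = th^T + (c/s) *: u^T by apply/matrixP => i j; rewrite !mxE.
rewrite Hphi !sqnormE /phi Tr mulmxDl !mulmxDr.
rewrite -!scalemxAl -!scalemxAr G1 G2.
have G3m : u^T *m u = s%:M by rewrite [LHS]mx11_scalar G3'.
rewrite !scaler0 !add0r addr0 G3m scalerA scale_scalar_mx [in LHS]mxE.
rewrite [X in _ + X]mxE eqxx mulr1n.
by field.
Qed.
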